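(* In the setting described in the context, if Method 1 stops at iteration $k$ (i.e. $x^{k+1}=x^k$), then $x^k\in\operatorname{zer}(A+B)$.
   Context: Let $\mathcal H$ be a real Hilbert space with inner product $\langle\cdot,\cdot\rangle$ and norm $\|\cdot\|$. Let $A_1:\mathcal H\to\mathcal H$ be $\beta$-cocoercive for some $\beta>0$ (i.e. $\langle A_1x-A_1y,x-y\rangle\ge\beta\|A_1x-A_1y\|^2$ for all $x,y$), let $A_2:\mathcal H\to\mathcal H$ be maximally monotone and uniformly continuous, let $B:\mathcal H\rightrightarrows\mathcal H$ be maximally monotone, and set $A:=A_1+A_2$. Assume $\operatorname{zer}(A+B):=\{x:0\in Ax+Bx\}\neq\emptyset$. $J_{\alpha B}:=(I+\alpha B)^{-1}$ for $\alpha>0$, and $P_C$ denotes the orthogonal projection onto a nonempty closed convex set $C$. Fix $\theta,\delta\in(0,1)$, $\bar\delta>0$ with $1-\delta-\bar\delta>0$, and $\alpha_{-1}>0$ with $\alpha_{-1}\le4\beta\bar\delta$. Conceptual Algorithm: pick $x^0\in\mathcal H$. Given $x^k$ and $\alpha_{k-1}$, for $j\in\mathbb N$ let $\bar x^k_j:=J_{\alpha_{k-1}\theta^jB}(x^k-\alpha_{k-1}\theta^jAx^k)$ and let $j(k)$ be the smallest $j\in\mathbb N$ with $\alpha_{k-1}\theta^j\langle A_2x^k-A_2\bar x^k_j,x^k-\bar x^k_j\rangle\le\delta\|x^k-\bar x^k_j\|^2$. Set $\alpha_k:=\alpha_{k-1}\theta^{j(k)}$, $\bar x^k:=J_{\alpha_kB}(x^k-\alpha_kAx^k)$,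 $r_k:=\frac{\bar\delta}{\alpha_k}\|x^k-\bar x^k\|^2$ and $T_k:=\{x\in\mathcal H:\langle \frac{x^k-\bar x^k}{\alpha_k}-(A_2x^k-A_2\bar x^k),x-\bar x^k\rangle\le r_k\}$. Method 1 sets $x^{k+1}:=P_{T_k}(x^k)$ and stops if $x^{k+1}=x^k$. *)

(* Defs.v *)
(* scalars R : realType, Hilbert space = lmodType R with an
   inner product that is complete for the induced norm. *)
From HB Require Import structures.
From mathcomp Require Import all_boot all_order all_algebra.
From mathcomp Require Import reals.
Set Implicit Arguments. Unset Strict Implicit. Unset Printing Implicit Defensive.
Import Order.TTheory GRing.Theory Num.Theory.
Local Open Scope ring_scope.

Section Hilbert.
Variables (R : realType) (H : lmodType R) (ip : H -> H -> R).

Definition is_inner_product : Prop :=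
  (forall a x y z, ip (a *: x + y) z = a * ip x z + ip y z) /\
  (forall x y, ip x y = ip y x) /\
  (forall x, 0 <= ip x x) /\
  (forall x, ip x x = 0 -> x = 0).

Definition hnorm (x : H) : R := Num.sqrt (ip x x).

Definition hcomplete : Prop :=
  forall u : nat -> H,
    (forall e : R, 0 < e -> exists N : nat, forall m n : nat,
        (N <= m)%N -> (N <= n)%N -> hnorm (u m - u n) < e) ->
    exists l : H, forall e : R, 0 < e -> exists N : nat, forall n : nat,
        (N <= n)%N -> hnorm (u n - l) < e.

Definition hilbert : Prop := is_inner_product /\ hcomplete.

Definition cocoercive (A : H -> H) (beta : R) : Prop :=
  forall x y, ip (A x - A y) (x - y) >= beta * (hnorm (A x - A y)) ^+ 2.

(* set-valued operators as relations: B x u means u \in B x *)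
Definition monotone (B : H -> H -> Prop) : Prop :=
  forall x u y v, B x u -> B y v -> 0 <= ip (x - y) (u - v).

Definition maximal_monotone (B : H -> H -> Prop) : Prop :=
  monotone B /\
  forall x u, (forall y v, B y v -> 0 <= ip (x - y) (u - v)) -> B x u.

Definition graph (f : H -> H) : H -> H -> Prop := fun x u => u = f x.

Definition unif_continuous (f : H -> H) : Prop :=
  forall e : R, 0 < e -> exists d : R, 0 < d /\
    forall x y, hnorm (x - y) < d -> hnorm (f x - f y) < e.

(* p \in J_{aB}(z) = (I + aB)^{-1}(z), i.e. z \in p + a B p *)
Definition in_resolvent (a : R) (B : H -> H -> Prop) (z p : H) : Prop :=
  exists b, B p b /\ z = p + a *: b.

Definition in_zer (A : H -> H) (B : H -> H -> Prop) (x : H) : Prop :=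
  exists b, B x b /\ A x + b = 0.

Definition is_proj (C : H -> Prop) (x p : H) : Prop :=
  C p /\ forall y, C y -> hnorm (x - p) <= hnorm (x - y).

(* Iterations 0..k of Method 1 (Conceptual Algorithm + projection step).
   Indexing: alpha 0 = alpha_{-1}, alpha i.+1 = alpha_i;
   xt i j = \bar x^i_j, jk i = j(i), xb i = \bar x^i. *)
Definition method1_run (A1 A2 : H -> H) (B : H -> H -> Prop)
    (theta delta deltab : R) (x : nat -> H) (alpha : nat -> R)
    (xt : nat -> nat -> H) (jk : nat -> nat) (xb : nat -> H) (k : nat) : Prop :=
  let A := fun z => A1 z + A2 z in
  forall i : nat, (i <= k)%N ->
    let cond := fun j : nat =>
      alpha i * theta ^+ j * ip (A2 (x i) - A2 (xt i j)) (x i - xt i j)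
        <= delta * (hnorm (x i - xt i j)) ^+ 2 in
    (forall j : nat,
        in_resolvent (alpha i * theta ^+ j) B
          (x i - (alpha i * theta ^+ j) *: A (x i)) (xt i j)) /\
    cond (jk i) /\ (forall j : nat, (j < jk i)%N -> ~ cond j) /\
    alpha i.+1 = alpha i * theta ^+ (jk i) /\
    in_resolvent (alpha i.+1) B (x i - alpha i.+1 *: A (x i)) (xb i) /\
    let r := deltab / alpha i.+1 * (hnorm (x i - xb i)) ^+ 2 in
    let T := fun y : H =>
      ip ((alpha i.+1)^-1 *: (x i - xb i) - (A2 (x i) - A2 (xb i))) (y - xb i)
        <= r in
    is_proj T (x i) (x i.+1).

End Hilbert.

(* Main.v *)
Require Import Defs.
From HB Require Import structures.
From mathcomp Require Import all_boot all_order all_algebra.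
From mathcomp Require Import reals.
From mathcomp Require Import ring lra.
Import Order.TTheory GRing.Theory Num.Theory.
Local Open Scope ring_scope.

Set Implicit Arguments.
Section Aux.
Variables (R : realType) (H : lmodType R) (ip : H -> H -> R).
Hypothesis hip : is_inner_product ip.

Lemma ip0l z : ip 0 z = 0.
Proof.
case: hip => L _.
have := L 1 0 0 z; rewrite scaler0 addr0 mul1r => E.
by apply/eqP; rewrite -(subrr (ip 0 z)) {2}E addrK.
Qed.

Lemma ipDl x y z : ip (x + y) z = ip x z + ip y z.
Proof. by case: hip => L _; rewrite -{1}(scale1r x) L mul1r. Qed.

Lemma ipZl a x z : ip (a *: x) z = a * ip x z.
Proof. by case: hip => L _; rewrite -[a *: x]addr0 L ip0l addr0. Qed.

Lemma ipNl x z : ip (- x) z = - ip x z.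
Proof. by rewrite -scaleN1r ipZl mulN1r. Qed.

Lemma ipBl x y z : ip (x - y) z = ip x z - ip y z.
Proof. by rewrite ipDl ipNl. Qed.

Lemma ipC x y : ip x y = ip y x.
Proof. by case: hip => _ [C _]; apply: C. Qed.

Lemma ip_ge0 x : 0 <= ip x x.
Proof. by case: hip => _ [_ [P _]]; apply: P. Qed.

Lemma ip_eq0 x : ip x x = 0 -> x = 0.
Proof. by case: hip => _ [_ [_ P]]; apply: P. Qed.

Lemma hnorm2 x : hnorm ip x ^+ 2 = ip x x.
Proof. by rewrite /hnorm sqr_sqrtr // ip_ge0. Qed.

Lemma resolvent_uniq a (B : H -> H -> Prop) z p q :
  monotone ip B -> 0 < a -> in_resolvent a B z p -> in_resolvent a B z q -> p = q.
Proof.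
move=> mB a0 [b [Bb Ep]] [c [Bc Eq]].
have Hpq : p - q = a *: (c - b).
  have -> : p = z - a *: b by rewrite Ep addrK.
  have -> : q = z - a *: c by rewrite Eq addrK.
  by rewrite scalerBr opprB addrC -addrA addKr.
have := mB _ _ _ _ Bb Bc; rewrite Hpq ipZl.
have -> : ip (c - b) (b - c) = - ip (b - c) (b - c).
  by rewrite -ipNl opprB.
rewrite mulrN oppr_ge0 => le0.
have N0 : ip (b - c) (b - c) = 0.
  apply/eqP; rewrite eq_le ip_ge0 andbT.
  by rewrite -(pmulr_rle0 _ a0).
have bc : b = c by apply/eqP; rewrite -subr_eq0; apply/eqP/ip_eq0.
by apply/eqP; rewrite -subr_eq0 Hpq bc subrr scaler0.
Qed.

End Aux.
Unset Implicit Arguments.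

Theorem proposition4p6 (R : realType) (H : lmodType R) (ip : H -> H -> R)
  (A1 A2 : H -> H) (B : H -> H -> Prop) (beta theta delta deltab : R)
  (x : nat -> H) (alpha : nat -> R) (xt : nat -> nat -> H) (jk : nat -> nat)
  (xb : nat -> H) (k : nat) :
  hilbert ip ->
  0 < beta -> cocoercive ip A1 beta ->
  maximal_monotone ip (graph A2) -> unif_continuous ip A2 ->
  maximal_monotone ip B ->
  (exists z, in_zer (fun y => A1 y + A2 y) B z) ->
  0 < theta < 1 -> 0 < delta < 1 -> 0 < deltab -> 0 < 1 - delta - deltab ->
  0 < alpha 0%N -> alpha 0%N <= 4 * beta * deltab ->
  method1_run ip A1 A2 B theta delta deltab x alpha xt jk xb k ->
  (forall i : nat, (i < k)%N -> x i.+1 <> x i) ->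
  x k.+1 = x k ->
  in_zer (fun y => A1 y + A2 y) B (x k).
Proof.
move=> [hip _] _ _ _ _ [mB _] _ /andP[th0 _] /andP[de0 _] db0 gap a0 _ run _ Estop.
have apos : forall i, (i <= k)%N -> 0 < alpha i.+1.
  elim=> [|i IH] ik.
    have [_ [_ [_ [-> _]]]] := run 0%N ik.
    by rewrite mulr_gt0 // exprn_gt0.
  have [_ [_ [_ [-> _]]]] := run i.+1 ik.
  by rewrite mulr_gt0 ?exprn_gt0 // IH // ltnW.
have [Hxt [Hcond [_ [Ea [Hxb Hproj]]]]] := run k (leqnn k).
have ak := apos k (leqnn k).
set a := alpha k.+1 in ak Ea Hxb Hproj.
have xtE : xt k (jk k) = xb k.
  apply: (resolvent_uniq hip mB ak _ Hxb).
  by have := Hxt (jk k); rewrite -Ea.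
move: Hcond; rewrite /= -Ea xtE.
case: Hproj => /=; rewrite Estop.
set d := x k - xb k.
set g := ip (A2 (x k) - A2 (xb k)) d.
rewrite ipBl // ipZl // hnorm2 // => Hp _ Hc.
set N := ip d d in Hp Hc.
have N0 : 0 <= N by apply: ip_ge0.
have a1 : a^-1 * N - g <= deltab * N / a.
  by move: Hp; rewrite [deltab / a * N]mulrAC.
have h1 : N - a * g <= deltab * N.
  have e1 : N - a * g = a * (a^-1 * N - g).
    by rewrite mulrBr mulrA divff ?gt_eqF // mul1r.
  have e2 : deltab * N = a * (deltab * N / a).
    by rewrite [a * _]mulrC divfK ?gt_eqF.
  by rewrite e1 [X in _ <= X]e2 ler_pM2l.
have NN : N = 0.
  apply/eqP; rewrite eq_le N0 andbT.
  have : (1 - delta - deltab) * N <= 0 by lra.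
  by rewrite pmulr_rle0.
have dE : xb k = x k.
  by apply/eqP; rewrite eq_sym -subr_eq0; apply/eqP/(ip_eq0 hip).
case: Hxb => b [Bb Eb].
exists b; rewrite -dE; split => //.
move: Eb; rewrite dE => /addrI Eb.
have : a *: (A1 (x k) + A2 (x k) + b) = 0.
  by rewrite scalerDr -Eb subrr.
move/eqP; rewrite scaler_eq0 gt_eqF //=; exact: eqP.
Qed.
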